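(* Let $p=\langle P_0,\dots,P_k\rangle$ be a path in an MPDAG $\mathcal G$. Then $p$ is possibly causal if and only if $\mathcal G$ contains no directed path $P_i\leftarrow\cdots\leftarrow P_j$ (i.e. no directed path from $P_j$ to $P_i$) for any $0\le i<j\le k$.
   Context: An MPDAG $\mathcal G$ is a graph with directed ($\to$) and undirected ($-$) edges and no directed cycles, obtained from a CPDAG (the graph representing a Markov equivalence class of DAGs) by orienting some undirected edges and closing under Meek's orientation rules R1–R4; $[\mathcal G]$ is the set of DAGs with the same nodes, adjacencies and directed edges as $\mathcal G$. A path is a sequence of distinct nodes with successive nodes adjacent; a directed path is of the form $A\to\cdots\to B$. A path $\langle V_1,\dots,V_k\rangle$ is possibly causal if $\mathcal G$ contains no edge $V_i\leftarrow V_j$ with $1\le i<j\le k$. *)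

(* Defs.v *)
From mathcomp Require Import all_boot.

Set Implicit Arguments.
Unset Strict Implicit.
Unset Printing Implicit Defensive.

(* A partially directed graph on nodes T:
   gdir G x y  means  x -> y ;  gund G x y  means  x - y. *)
Record pgraph (T : finType) := PGraph { gdir : rel T ; gund : rel T }.

Section Graphs.
Variable T : finType.
Implicit Types (G D C : pgraph T) (x y a b c d : T).

Definition adj G x y : bool := [|| gdir G x y, gdir G y x | gund G x y].

Definition wf G : Prop :=
  (forall x, ~~ gdir G x x /\ ~~ gund G x x) /\
  (forall x y, gund G x y = gund G y x) /\
  (forall x y, ~~ (gdir G x y && gdir G y x)) /\
  (forall x y, ~~ (gdir G x y && gund G x y)).

Definition dir_path G x y : Prop :=
  exists s : seq T, [/\ path (gdir G) x s, last x s = y & uniq (x :: s)].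

Definition acyclic G : Prop := forall x y, gdir G x y -> ~ connect (gdir G) y x.

Definition is_DAG D : Prop :=
  wf D /\ (forall x y, gund D x y = false) /\ acyclic D.

Definition vstruct D a b c : Prop :=
  [/\ gdir D a b, gdir D c b, a != c & ~~ adj D a c].

Definition markov_equiv D1 D2 : Prop :=
  (forall x y, adj D1 x y = adj D2 x y) /\
  (forall a b c, vstruct D1 a b c <-> vstruct D2 a b c).

Definition is_CPDAG C : Prop :=
  exists D, is_DAG D /\
    (forall x y,
      (gdir C x y <-> (adj D x y /\
          forall D', is_DAG D' -> markov_equiv D D' -> gdir D' x y)) /\
      (gund C x y <-> ((exists D1, [/\ is_DAG D1, markov_equiv D D1 & gdir D1 x y]) /\
                       (exists D2, [/\ is_DAG D2, markov_equiv D D2 & gdir D2 y x])))).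

(* [G]: DAGs with the same nodes, adjacencies and directed edges as G *)
Definition in_class G D : Prop :=
  is_DAG D /\ (forall x y, adj D x y = adj G x y) /\
  (forall x y, gdir G x y -> gdir D x y).

Definition orient_some C G1 : Prop :=
  wf G1 /\
  (forall x y, gdir C x y -> gdir G1 x y) /\
  (forall x y, gdir G1 x y -> gdir C x y \/ gund C x y) /\
  (forall x y, gund G1 x y <-> [/\ gund C x y, ~~ gdir G1 x y & ~~ gdir G1 y x]).

(* Premises of Meek's rules R1-R4 for orienting the undirected edge a - b
   as a -> b. *)
Definition meek_R1 G a b : Prop :=
  exists c, [/\ gdir G c a, gund G a b, c != b & ~~ adj G c b].
Definition meek_R2 G a b : Prop :=
  exists c, [/\ gdir G a c, gdir G c b & gund G a b].
Definition meek_R3 G a b : Prop :=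
  exists c d, gund G a b /\ gund G a c /\ gund G a d /\ gdir G c b /\
                 gdir G d b /\ c != d /\ ~~ adj G c d.
Definition meek_R4 G a b : Prop :=
  exists c d, gund G a b /\ gund G a c /\ gdir G c d /\ gdir G d b /\
                 adj G a d /\ c != b /\ ~~ adj G c b.

Definition meek_applicable G a b : Prop :=
  meek_R1 G a b \/ meek_R2 G a b \/ meek_R3 G a b \/ meek_R4 G a b.

Definition orient_edge G a b G' : Prop :=
  (forall x y, gdir G' x y <-> (gdir G x y \/ (x = a /\ y = b))) /\
  (forall x y, gund G' x y <-> (gund G x y /\ ~ (x = a /\ y = b) /\ ~ (x = b /\ y = a))).

Definition meek_step G G' : Prop :=
  exists a b, meek_applicable G a b /\ orient_edge G a b G'.

Inductive meek_reach : pgraph T -> pgraph T -> Prop :=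
  | meek_refl G : meek_reach G G
  | meek_trans G G' G'' : meek_step G G' -> meek_reach G' G'' -> meek_reach G G''.

Definition meek_closed G : Prop := forall a b, ~ meek_applicable G a b.

(* MPDAG: acyclic graph obtained from a CPDAG C by orienting some undirected
   edges consistently with C (some DAG of [C] agrees with the new
   orientations) and closing under Meek's rules R1-R4. *)
Definition is_MPDAG G : Prop :=
  wf G /\ acyclic G /\
  exists C G1, [/\ is_CPDAG C, orient_some C G1,
                  (exists D, in_class G1 D) &
                  meek_reach G1 G /\ meek_closed G].

(* a path <P_0,...,P_k> given as P_0 :: s : distinct nodes, successive
   nodes adjacent *)
Definition is_path G (x : T) (s : seq T) : Prop :=
  uniq (x :: s) /\ path (adj G) x s.

Definition possibly_causal G (x : T) (s : seq T) : Prop :=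
  forall i j, i < j -> j < size (x :: s) ->
    ~~ gdir G (nth x (x :: s) j) (nth x (x :: s) i).

End Graphs.

(* Main.v *)
Require Import Defs.
From mathcomp Require Import all_boot zify.

Section Main.
Variables (T : finType) (G : pgraph T).
Hypothesis Hwf : wf G.
Hypothesis Hac : acyclic G.
Hypothesis Hmc : meek_closed G.

Definition nd (a b : T) := ~~ gdir G b a.
Definition pc (x : T) (s : seq T) :=
  [&& uniq (x :: s), path (adj G) x s & pairwise nd (x :: s)].

Lemma adjC a b : adj G a b = adj G b a.
Proof.
case: Hwf => _ [Hsym _]; rewrite /adj Hsym.
by case: (gdir G a b); case: (gdir G b a).
Qed.

Lemma gundC a b : gund G a b = gund G b a.
Proof. by case: Hwf => _ [Hsym _]. Qed.

Lemma pc_tail x y s : pc x (y :: s) -> pc y s.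
Proof.
rewrite /pc /= => /and3P[/andP[_ ->] /andP[_ ->] /andP[_ ->]] //.
Qed.

Lemma pc_prefix x s1 s2 : pc x (s1 ++ s2) -> pc x s1.
Proof.
rewrite /pc -cat_cons cat_uniq cat_path pairwise_cat.
by case/and3P => /andP[-> _] /andP[-> _] /and3P[_ -> _].
Qed.

Lemma key n : forall s x, size s <= n -> pc x s -> forall v, v \in s ->
  connect (gdir G) v x -> False.
Proof.
have [Hloop [Hsym [Hdd Hdu]]] := Hwf.
elim: n => [|n IH] [|V1 s'] x0 //= Hsz Hpc0 v Hv Hc.
set y := last V1 s'.
have lastE : forall x', last x' (V1 :: s') = y by [].
have IHpre : forall x', pc x' (V1 :: s') -> forall w, w \in V1 :: s' -> w != y ->
    connect (gdir G) w x' -> False.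
  move=> x' Hp w Hw Hne.
  have Hsz2 : size (V1 :: s') <= n.+1 by [].
  move: Hp Hne Hsz2; rewrite -(lastE x').
  case/splitPr: Hw => s1 s2; case: s2 => [|a s2].
    by rewrite last_cat /= eqxx.
  move=> Hp _ Hsz' Hcw.
  have Hp' : pc x' (rcons s1 w) by apply: (@pc_prefix _ _ (a :: s2)); rewrite cat_rcons.
  apply: (IH (rcons s1 w) x' _ Hp' w _ Hcw); last by rewrite mem_rcons mem_head.
  move: Hsz'; rewrite size_rcons size_cat /=; lia.
have Hy : y \in V1 :: s' by apply: mem_last.
have pcT : pc V1 s' by apply: pc_tail Hpc0.
have dirV1 : forall w, gdir G w V1 -> connect (gdir G) y w -> False.
  move=> w Hw Hyw; case Es: s' => [|a t].
    by move: Hyw; rewrite /y Es /= => Hyw; exact: (Hac _ _ Hw Hyw).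
  move: pcT Hsz Hyw; rewrite /y Es => pcT Hsz Hyw.
  apply: (IH (a :: t) V1 _ pcT (last V1 (a :: t))); first by [].
  - exact: (mem_last a t).
  - exact: connect_trans Hyw (connect1 Hw).
have Hxy : forall x, pc x (V1 :: s') -> x != y.
  move=> x; rewrite /pc => /and3P[/andP[Hn _] _ _].
  by apply: contraNneq Hn => ->.
have inner : forall k x q, size q <= k -> pc x (V1 :: s') ->
    path (gdir G) y q -> last y q = x -> False.
  elim=> [|k IHk] x q Hq Hp Hpath Hlast.
    case: q Hq Hpath Hlast => // _ _ /= Hl; subst x.
    by move: (Hxy _ Hp); rewrite eqxx.
  case/lastP: q Hq Hpath Hlast => [|q' z] Hq Hpath Hlast.
    by move: Hlast => /= Hl; subst x; move: (Hxy _ Hp); rewrite eqxx.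
  rewrite last_rcons in Hlast; subst z.
  rewrite rcons_path in Hpath; case/andP: Hpath => Hpath' Hux.
  set u := last y q' in Hux.
  have Hyu : connect (gdir G) y u by apply/connectP; exists q'.
  move: (Hp); rewrite /pc => /and3P[Hun Hpa Hpw].
  move: Hun Hpa Hpw => /= /andP[HxnS HunS] /andP[HxV1 HpaS] /andP[HallX HpwS].
  have Hyx : connect (gdir G) y x := connect_trans Hyu (connect1 Hux).
  have HallX' : all (nd x) (V1 :: s') := HallX.
  have Hnx : forall w, w \in V1 :: s' -> ~~ gdir G w x.
    by move=> w Hw; apply: (allP HallX' w Hw).
  case/or3P: HxV1 => [HxV | HVx | HxVu].
  - exact: (dirV1 x HxV Hyx).
  - by move: (Hnx V1 (mem_head _ _)); rewrite HVx.
  have Hux' : u != x.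
    apply: contraTN Hux => /eqP ->; exact: (proj1 (Hloop x)).
  have HuS : u \notin V1 :: s'.
    by apply/negP => Hu; move: (Hnx u Hu); rewrite Hux.
  have HuV1 : u != V1.
    by apply: contraNneq HuS => ->; rewrite mem_head.
  have HadjuV1 : adj G u V1.
    apply/negPn/negP => Hna; apply: (Hmc x V1); left; exists u; split => //.
  case/or3P: HadjuV1 => [HuV | HVu | HuVu].
  - exact: (dirV1 u HuV Hyu).
  - by apply: (Hmc V1 x); right; left; exists u; split => //; rewrite gundC.
  case Hh: (has (fun w => gdir G w u) (V1 :: s')); last first.
    apply: (IHk u q' _ _ Hpath' erefl).
      by move: Hq; rewrite size_rcons.
    rewrite /pc /= HuS HunS HpaS HpwS.
    have -> : adj G u V1 by rewrite /adj HuVu !orbT.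
    have Hall : all (nd u) (V1 :: s').
      apply/allP => w Hw; apply/negP => H; move/negP: Hh; apply; apply/hasP; by exists w.
    by move: Hall => /= ->.
  case/hasP: Hh => w Hw Hwu.
  case Ewy: (w == y); last first.
    apply: (IHpre x Hp w Hw (negbT Ewy)).
    exact: connect_trans (connect1 Hwu) (connect1 Hux).
  move/eqP: Ewy => Ewy; rewrite Ewy in Hwu.
  case EyV: (y == V1).
    move/eqP: EyV => EyV; rewrite EyV in Hwu.
    by move: (Hdu V1 u); rewrite Hwu gundC HuVu.
  have Hys' : y \in s' by move: Hy; rewrite in_cons EyV.
  case Hadjxy: (adj G x y).
    have Hs0 : 0 < size s'.
      rewrite lt0n size_eq0; apply/eqP => E; by rewrite E in Hys'.
    have Hpcy : pc x [:: y].
      rewrite /pc /= Hadjxy andbT /nd (negPf (Hnx y Hy)) andbT in_cons orbF.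
      by rewrite (Hxy x Hp).
    apply: (IH [:: y] x _ Hpcy y (mem_head _ _) Hyx).
    exact: (leq_trans Hs0 Hsz).
  case HadjV1y: (adj G V1 y).
    case/or3P: HadjV1y => [HVy | HyV | HVyu].
    - by apply: (Hmc V1 u); right; left; exists y; split => //; rewrite gundC.
    - move/andP: HpwS => [HallV _]; move: (allP HallV y Hys').
      by rewrite /nd HyV.
    - apply: (Hmc V1 x); right; right; right; exists y, u.
      split; first by rewrite gundC.
      split; first by [].
      split; first by [].
      split; first by [].
      split; first by rewrite adjC /adj HuVu !orbT.
      split; first by rewrite eq_sym (Hxy x Hp).
      by rewrite adjC Hadjxy.
  apply: (Hmc u V1); left; exists y; split => //.
  - by rewrite EyV.
  - by rewrite adjC HadjV1y.
case Evy: (v == y).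
  move/eqP: Evy => Evy; rewrite Evy in Hc.
  case/connectP: Hc => q Hq Hl.
  exact: (inner (size q) x0 q (leqnn _) Hpc0 Hq (esym Hl)).
exact: (IHpre x0 Hpc0 v Hv (negbT Evy) Hc).
Qed.
End Main.
Arguments pc {T} G x s.
Arguments pc_tail {T G x y s}.
Arguments key {T G}.

Lemma pc_drop {T : finType} {G : pgraph T} i : forall x s, i <= size s ->
  pc G x s -> pc G (nth x (x :: s) i) (drop i s).
Proof.
elim: i => [|i IH] x s Hi Hp; first by rewrite drop0.
case: s Hi Hp => [|y s] //= Hi Hp.
rewrite (set_nth_default y); last by [].
exact: (IH y s Hi (pc_tail Hp)).
Qed.

Theorem mainTheorem17 (T : finType) (G : pgraph T) (x : T) (s : seq T) :
  is_MPDAG G -> is_path G x s ->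
  (possibly_causal G x s <->
   (forall i j, i < j -> j < size (x :: s) ->
      ~ dir_path G (nth x (x :: s) j) (nth x (x :: s) i))).
Proof.
move=> [Hwf [Hac [C [G1 [_ _ _ [_ Hmc]]]]]] [Hu Hpa].
split.
- move=> Hpc i j Hij Hj [q [Hqp Hql Hqu]].
  have pcl : pc G x s.
    rewrite /pc Hu Hpa !andTb; apply/(pairwiseP x) => a b Ha Hb Hab.
    exact: (Hpc a b Hab Hb).
  have His : i <= size s by move: Hij Hj => /=; lia.
  have Hpd := @pc_drop _ _ i x s His pcl.
  have [j' Ej] : exists j', j = j'.+1 by case: (j) Hij => [|j'] //; exists j'.
  subst j.
  apply: (key Hwf Hac Hmc _ _ _ (leqnn _) Hpd (nth x (x :: s) j'.+1)).
    have Hij' : i <= j' by [].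
    have E : nth x (x :: s) j'.+1 = nth x (drop i s) (j' - i).
      by rewrite nth_drop subnKC.
    rewrite E; apply: mem_nth; rewrite size_drop.
    move: Hj Hij'; rewrite /= => Hj Hij'; lia.
  by apply/connectP; exists q.
- move=> Hnd i j Hij Hj; apply/negP => Hg; apply: (Hnd i j Hij Hj).
  exists [:: nth x (x :: s) i]; split => /=; first by rewrite Hg.
    by [].
  rewrite andbT inE (nth_uniq x Hj _ Hu) ?(ltn_trans Hij Hj) //.
  by rewrite eq_sym neq_ltn Hij.
Qed.
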